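(* Let $1\le k\le\ell\le\lfloor n/2\rfloor$, $\lambda=(n-k,k)$, $\mu=(n-\ell,\ell)$, and let $P$ be the random transpositions chain on $\mathcal{T}_{\lambda,\mu}$ with stationary distribution $\pi_{\lambda,\mu}$. If $c>0$ and $t=(n/4)(\log(k)+c)$, then \[ \sum_{\mathbf{x}\in\mathcal{T}_{\lambda,\mu}}\pi_{\lambda,\mu}(\mathbf{x})\,\|P^t(\mathbf{x},\cdot)-\pi_{\lambda,\mu}\|_{TV}^2\le e^{-c}. \] If $t=cn/4$, then \[ \sum_{\mathbf{x}\in\mathcal{T}_{\lambda,\mu}}\pi_{\lambda,\mu}(\mathbf{x})\,\chi^2_{\mathbf{x}}(t)\ge 1-c. \]
   Context: $\mathcal{T}_{\lambda,\mu}$ is the set of $2\times2$ nonnegative integer tables with row sums $n-k,k$ and column sums $n-\ell,\ell$. The Fisher–Yates distribution is $\pi_{\lambda,\mu}(T)=\frac1{n!}\prod_{i,j}\frac{\lambda_i!\mu_j!}{T_{ij}!}$. The random transpositions chain: for $T'$ obtained from $T$ by subtracting $1$ at cells $(i_1,j_1),(i_2,j_2)$ and adding $1$ at $(i_1,j_2),(i_2,j_1)$ (with $i_1\ne i_2$, $j_1\ne j_2$), $P(T,T')=2T_{i_1j_1}T_{i_2j_2}/n^2$; $P(T,T)$ is the remaining mass. $\|\nu-\pi\|_{TV}=\sup_A|\nu(A)-\pi(A)|$ and $\chi^2_{\mathbf{x}}(t)=\sum_{\mathbf{y}}\frac{(P^t(\mathbf{x},\mathbf{y})-\pi_{\lambda,\mu}(\mathbf{y}))^2}{\pi_{\lambda,\mu}(\mathbf{y})}$.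 *)

(* Defs.v *)
From HB Require Import structures.
From mathcomp Require Import all_boot all_order all_algebra.
From mathcomp Require Import all_classical all_reals all_analysis.
Unset Printing Implicit Defensive.
Import Order.TTheory GRing.Theory Num.Theory.
Local Open Scope ring_scope.

(* Row sums lambda = (n-k, k), column sums mu = (n-l, l). *)
Definition rowsum (n k : nat) (i : 'I_2) : nat := if val i == 0%N then (n - k)%N else k.
Definition colsum (n l : nat) (j : 'I_2) : nat := if val j == 0%N then (n - l)%N else l.

(* A 2x2 nonnegative integer table (entries are automatically <= n). *)
Definition is_table (n k l : nat) (M : 'M['I_n.+1]_2) : bool :=
  [forall i : 'I_2, (\sum_(j < 2) (M i j : nat))%N == rowsum n k i] &&
  [forall j : 'I_2, (\sum_(i < 2) (M i j : nat))%N == colsum n l j].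

Definition tab (n k l : nat) := {M : 'M['I_n.+1]_2 | is_table n k l M}.

Definition tabE n k l (T : tab n k l) (i j : 'I_2) : nat := val T i j.

Definition piFY (R : realType) n k l (T : tab n k l) : R :=
  ((\prod_(i < 2) ((rowsum n k i)`!)%:R) * (\prod_(j < 2) ((colsum n l j)`!)%:R))
  / ((n`!)%:R * \prod_(i < 2) \prod_(j < 2) ((tabE n k l T i j)`!)%:R).

Definition ind (b : bool) : int := (b : nat)%:Z.

Definition is_move n k l (T T' : tab n k l) (i1 j1 i2 j2 : 'I_2) : bool :=
  [forall i : 'I_2, [forall j : 'I_2,
     ((tabE n k l T' i j)%:Z == (tabE n k l T i j)%:Z
        - ind ((i == i1) && (j == j1)) - ind ((i == i2) && (j == j2))
        + ind ((i == i1) && (j == j2)) + ind ((i == i2) && (j == j1)))]].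

(* Off-diagonal transition probability: each move is determined by the
   unordered pair of rows {i1,i2} (taken with i1 < i2) and the ordered pair of
   distinct columns (j1,j2); its probability is 2 T_{i1 j1} T_{i2 j2} / n^2. *)
Definition Poff (R : realType) n k l (T T' : tab n k l) : R :=
  \sum_(i1 < 2) \sum_(i2 < 2 | (i1 < i2)%N) \sum_(j1 < 2) \sum_(j2 < 2 | j1 != j2)
    (if is_move n k l T T' i1 j1 i2 j2 then
       2 * (tabE n k l T i1 j1)%:R * (tabE n k l T i2 j2)%:R / (n%:R ^+ 2) else 0).

Definition Ptr (R : realType) n k l (T T' : tab n k l) : R :=
  if T' == T then 1 - \sum_(T'' : tab n k l | T'' != T) Poff R n k l T T''
  else Poff R n k l T T'.

Fixpoint Pt (R : realType) n k l (t : nat) (x y : tab n k l) : R :=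
  match t with
  | 0 => (x == y)%:R
  | t'.+1 => \sum_(z : tab n k l) Pt R n k l t' x z * Ptr R n k l z y
  end.

Definition tv (R : realType) n k l (t : nat) (x : tab n k l) : R :=
  \big[Num.max/0]_(A : {set tab n k l})
     `| \sum_(y in A) Pt R n k l t x y - \sum_(y in A) piFY R n k l y |.

Definition chi2 (R : realType) n k l (x : tab n k l) (t : nat) : R :=
  \sum_(y : tab n k l) (Pt R n k l t x y - piFY R n k l y) ^+ 2 / piFY R n k l y.

(* Main.v *)
Require Import Defs.
From HB Require Import structures.
From mathcomp Require Import all_boot all_order all_algebra.
From mathcomp Require Import all_classical all_reals all_analysis.
From mathcomp Require Import zify ring lra.
Import Order.TTheory GRing.Theory Num.Theory.
Set Implicit Arguments. Unset Strict Implicit.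
Local Open Scope ring_scope.
Definition o0 : 'I_2 := ord0.
Definition o1 : 'I_2 := ord_max.

Lemma I2_cases (i : 'I_2) : i = o0 \/ i = o1.
Proof. case: i => [[|[|//]]] Hi; [left|right]; exact: val_inj. Qed.

Lemma lift00 : lift ord0 ord0 = o1 :> 'I_2.
Proof. exact: val_inj. Qed.

Notation E T i j := (tabE _ _ _ T i j).

Lemma tab_sums n k l (T : tab n k l) :
  [/\ (E T o0 o0 + E T o0 o1 = n - k)%N, (E T o1 o0 + E T o1 o1 = k)%N,
      (E T o0 o0 + E T o1 o0 = n - l)%N & (E T o0 o1 + E T o1 o1 = l)%N].
Proof.
case: T => M HM; have /andP[Hr Hc] := HM; move/forallP: Hr => Hr; move/forallP: Hc => Hc; rewrite /tabE /=.
move: (Hr o0) (Hr o1) (Hc o0) (Hc o1).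
rewrite !big_ord_recl !big_ord0 /rowsum /colsum /= !lift00 !addn0.
by move=> /eqP h1 /eqP h2 /eqP h3 /eqP h4; split.
Qed.

Definition hyp n k l := ((k <= l) && (k + l <= n))%N.

Definition ent n k l (d : nat) (a b : 'I_2) : nat :=
  if a == o0 then (if b == o0 then n - k - l + d else l - d)%N
  else (if b == o0 then k - d else d)%N.

Definition mkM n k l d : 'M['I_n.+1]_2 := \matrix_(a, b) inord (ent n k l d a b).

Lemma ent_le n k l (H : hyp n k l) (i : 'I_k.+1) a b : (ent n k l i a b <= n)%N.
Proof.
move: H (ltn_ord i) => /andP[H1 H2] Hi.
rewrite /ent; case: (a == o0); case: (b == o0); lia.
Qed.

Lemma mkM_table n k l (H : hyp n k l) (i : 'I_k.+1) : is_table n k l (mkM n k l i).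
Proof.
have Hl := ent_le H i.
move: H (ltn_ord i) => /andP[H1 H2] Hi.
apply/andP; split; apply/forallP => a; rewrite !big_ord_recl big_ord0 !mxE !inordK ?Hl // ?lift00 /ent /=;
 case: (I2_cases a) => ->; rewrite /rowsum /colsum /=; apply/eqP; lia.
Qed.

Definition ofI n k l (H : hyp n k l) (i : 'I_k.+1) : tab n k l :=
  exist _ (mkM n k l i) (mkM_table H i).

Lemma E_ofI n k l (H : hyp n k l) i a b : E (ofI H i) a b = ent n k l i a b.
Proof. by rewrite /tabE /= mxE inordK // ltnS ent_le. Qed.

Definition toI n k l (T : tab n k l) : 'I_k.+1 := inord (E T o1 o1).

Lemma toI_ofI n k l (H : hyp n k l) i : toI (ofI H i) = i.
Proof. by apply: val_inj; rewrite /toI E_ofI /ent /= inordK. Qed.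

Lemma ofI_toI n k l (H : hyp n k l) (T : tab n k l) : ofI H (toI T) = T.
Proof.
apply: val_inj; apply/matrixP => a b.
have [S1 S2 S3 S4] := tab_sums T.
have /andP[H1 H2] := H.
have Hk : (E T o1 o1 <= k)%N by lia.
apply: val_inj; rewrite /= mxE inordK; last by rewrite ltnS ent_le.
rewrite /ent /toI inordK ?ltnS //.
transitivity (E T a b); last by [].
case: (I2_cases a) => ->; case: (I2_cases b) => -> /=; lia.
Qed.

Lemma o01 : (o0 == o1) = false. Proof. by []. Qed.
Lemma o10 : (o1 == o0) = false. Proof. by []. Qed.

Lemma is_move_down n k l (T T' : tab n k l) :
  is_move n k l T T' o0 o0 o1 o1 = (E T' o1 o1 + 1 == E T o1 o1)%N.
Proof.
have [S1 S2 S3 S4] := tab_sums T; have [S1' S2' S3' S4'] := tab_sums T'.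
apply/idP/idP.
  move/forallP => /(_ o1) /forallP /(_ o1).
  rewrite !eqxx ?o01 ?o10 /ind /= => /eqP h; apply/eqP; lia.
move/eqP => h; apply/forallP => a; apply/forallP => b.
case: (I2_cases a) => ->; case: (I2_cases b) => ->;
  rewrite !eqxx ?o01 ?o10 /ind /=; apply/eqP; lia.
Qed.

Lemma is_move_up n k l (T T' : tab n k l) :
  is_move n k l T T' o0 o1 o1 o0 = (E T' o1 o1 == E T o1 o1 + 1)%N.
Proof.
have [S1 S2 S3 S4] := tab_sums T; have [S1' S2' S3' S4'] := tab_sums T'.
apply/idP/idP.
  move/forallP => /(_ o1) /forallP /(_ o1).
  rewrite !eqxx ?o01 ?o10 /ind /= => /eqP h; apply/eqP; lia.
move/eqP => h; apply/forallP => a; apply/forallP => b.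
case: (I2_cases a) => ->; case: (I2_cases b) => ->;
  rewrite !eqxx ?o01 ?o10 /ind /=; apply/eqP; lia.
Qed.

Lemma Poff_E (R : realType) n k l (T T' : tab n k l) :
  Poff R n k l T T' =
  (if (E T' o1 o1 + 1 == E T o1 o1)%N then 2 * (E T o0 o0)%:R * (E T o1 o1)%:R / n%:R ^+ 2 else 0)
  + (if (E T' o1 o1 == E T o1 o1 + 1)%N then 2 * (E T o0 o1)%:R * (E T o1 o0)%:R / n%:R ^+ 2 else 0).
Proof.
rewrite /Poff.
do 4! rewrite ?big_mkcond /= ?big_ord_recl ?big_ord0 /=.
rewrite ?lift00 -/o0 /=.
rewrite big1; last by case=> [[|[|]]].
by rewrite is_move_down is_move_up !addr0 !add0r.
Qed.

Lemma sum_if_eq (R : realType) (N x : nat) (G : nat -> R) :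
  \sum_(j < N) (if (j : nat) == x then G j else 0) = if (x < N)%N then G x else 0.
Proof.
case: ltnP => h.
  rewrite (bigD1 (Ordinal h)) //= eqxx big1 ?addr0 // => j /negbTE hj.
  case: eqP => // e; move/eqP: hj; case; apply/val_inj; exact: e.
rewrite big1 // => j _; rewrite ifF //; apply/negbTE.
by rewrite neq_ltn (leq_trans (ltn_ord j) h).
Qed.

Lemma sum_if_eqS (R : realType) (N x : nat) (G : nat -> R) :
  \sum_(j < N) (if (j.+1 == x)%N then G j else 0) = if (0 < x <= N)%N then G x.-1 else 0.
Proof.
case: x => [|x]; first by rewrite big1.
rewrite (eq_bigr (fun j : 'I_N => if (j : nat) == x then G j else 0)); last by move=> j _; rewrite eqSS.
by rewrite sum_if_eq.
Qed.

Lemma Ptr_rowsum (R : realType) n k l (T : tab n k l) : \sum_y Ptr R n k l T y = 1.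
Proof.
rewrite (bigD1 T) //= {1}/Ptr eqxx.
rewrite [X in _ + X](eq_bigr (fun y => Poff R n k l T y)); last by move=> y /negbTE hy; rewrite /Ptr hy.
by rewrite subrK.
Qed.

Definition uN (R : realType) n k l (i : nat) : R := 2 * (l - i)%:R * (k - i)%:R / n%:R ^+ 2.
Definition wN (R : realType) n k l (i : nat) : R := 2 * (n - k - l + i)%:R * i%:R / n%:R ^+ 2.

Lemma uNk (R : realType) n k l : uN R n k l k = 0.
Proof. by rewrite /uN subnn mulr0n !mulr0 mul0r. Qed.
Lemma wN0 (R : realType) n k l : wN R n k l 0 = 0.
Proof. by rewrite /wN mulr0 mul0r. Qed.

Lemma Poff_ofI (R : realType) n k l (H : hyp n k l) (i j : 'I_k.+1) :
  Poff R n k l (ofI H i) (ofI H j) =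
  (if (j.+1 == i)%N then wN R n k l i else 0) + (if (j == i.+1 :> nat)%N then uN R n k l i else 0).
Proof.
rewrite Poff_E !E_ofI /ent !eqxx !o10 !addn1 /uN /wN.
by congr (_ + _); case: ifP => //; rewrite !mulrA.
Qed.

Lemma ofI_bij n k l (H : hyp n k l) : bijective (ofI H).
Proof. by exists (@toI n k l) => [i|T]; rewrite ?toI_ofI ?ofI_toI. Qed.

Lemma ofI_eq n k l (H : hyp n k l) i j : (ofI H i == ofI H j) = (i == j).
Proof. apply: can_eq; exact: toI_ofI. Qed.

Lemma sum_tab (R : realType) n k l (H : hyp n k l) (F : tab n k l -> R) :
  \sum_T F T = \sum_i F (ofI H i).
Proof. by rewrite (reindex (ofI H)) //; apply: onW_bij; exact: ofI_bij. Qed.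

Lemma Ptr_ofI (R : realType) n k l (H : hyp n k l) (i j : 'I_k.+1) :
  Ptr R n k l (ofI H i) (ofI H j) =
  (if j == i then 1 - uN R n k l i - wN R n k l i else 0)
  + (if (j.+1 == i)%N then wN R n k l i else 0) + (if (j == i.+1 :> nat)%N then uN R n k l i else 0).
Proof.
rewrite /Ptr ofI_eq; case: eqP => [->|ne]; last by rewrite Poff_ofI add0r.
have e1 : (i.+1 == i) = false by rewrite gtn_eqF.
have e2 : (i == i.+1 :> nat) = false by rewrite ltn_eqF.
rewrite e1 e2.
rewrite (reindex (ofI H)); last by apply: onW_bij; exact: ofI_bij.
rewrite (eq_bigl (fun z => z != i)); last by move=> z /=; rewrite ofI_eq.
rewrite (eq_bigr (fun z : 'I_k.+1 => (if (z.+1 == i)%N then wN R n k l i else 0) + (if (z == i.+1 :> nat)%N then uN R n k l i else 0))); last by move=> z _; rewrite Poff_ofI.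
rewrite big_split /=.
have Sw : \sum_(z < k.+1 | z != i) (if (z.+1 == i)%N then wN R n k l i else 0) = wN R n k l i.
  rewrite big_mkcond /=.
  rewrite (eq_bigr (fun z : 'I_k.+1 => if (z.+1 == i)%N then wN R n k l i else 0)); last first.
    by move=> z _; case: (eqVneq z i) => [->|//]; rewrite e1.
  rewrite (sum_if_eqS _ _ (fun _ => wN R n k l i)).
  by case: (nat_of_ord i) (ltn_ord i) => [|m] hm /=; rewrite ?wN0 // ltnW.
have Su : \sum_(z < k.+1 | z != i) (if (z == i.+1 :> nat)%N then uN R n k l i else 0) = uN R n k l i.
  rewrite big_mkcond /=.
  rewrite (eq_bigr (fun z : 'I_k.+1 => if (z == i.+1 :> nat)%N then uN R n k l i else 0)); last first.
    by move=> z _; case: (eqVneq z i) => [->|//]; rewrite e2.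
  rewrite (sum_if_eq _ _ (fun _ => uN R n k l i)).
  case: ifP => // /negbT; rewrite -leqNgt => h.
  have -> : (i : nat) = k by move: (ltn_ord i) h; lia.
  by rewrite uNk.
rewrite Sw Su; lra.
Qed.

Lemma mx_rev_pow (R : realType) N (A : 'M[R]_N.+1) (p : 'I_N.+1 -> R) :
  (forall i j, p i * A i j = p j * A j i) ->
  forall t i j, p i * (A ^+ t) i j = p j * (A ^+ t) j i.
Proof.
move=> Hr; elim=> [|t IH] i j.
  rewrite expr0 !mxE; case: (eqVneq i j) => [->//|ne].
  by rewrite !mulr0.
rewrite {1}exprSr [in RHS]exprS -!mulmxE !mxE !mulr_sumr.
apply: eq_bigr => z _.
by rewrite mulrA IH -mulrA mulrCA Hr mulrCA [(A ^+ t) z i * _]mulrC.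
Qed.

Lemma mx_row_pow (R : realType) N (A : 'M[R]_N.+1) :
  (forall i, \sum_j A i j = 1) -> forall t i, \sum_j (A ^+ t) i j = 1.
Proof.
move=> Hr; elim=> [|t IH] i.
  rewrite expr0 (bigD1 i) //= !mxE eqxx big1 ?addr0 // => j ne.
  by rewrite mxE eq_sym (negbTE ne).
rewrite exprSr -mulmxE.
rewrite (eq_bigr (fun j => \sum_z (A ^+ t) i z * A z j)); last by move=> j _; rewrite mxE.
rewrite exchange_big /=.
rewrite (eq_bigr (fun z => (A ^+ t) i z)) ?IH // => z _.
by rewrite -mulr_sumr Hr mulr1.
Qed.

Lemma chi_trace (R : realType) N (B : 'M[R]_N.+1) (p : 'I_N.+1 -> R) :
  (forall i, 0 < p i) -> \sum_i p i = 1 -> (forall i, \sum_j B i j = 1) ->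
  (forall i j, p i * B i j = p j * B j i) ->
  \sum_i p i * \sum_j (B i j - p j) ^+ 2 / p j = \tr (B *m B) - 1.
Proof.
move=> Hp Hs Hrow Hrev.
have E1 : forall i, p i * \sum_j (B i j - p j) ^+ 2 / p j = \sum_j (B j i * B i j) - p i.
  move=> i.
  have -> : \sum_j (B i j - p j) ^+ 2 / p j = \sum_j (B i j * B i j / p j - 2 * B i j + p j).
    apply: eq_bigr => j _; have := Hp j; rewrite lt0r => /andP[h _]; field; exact: h.
  rewrite !big_split /= Hs sumrN -mulr_sumr Hrow mulr1 !mulrDr mulr_sumr.
  have -> : \sum_j p i * (B i j * B i j / p j) = \sum_j B j i * B i j.
    apply: eq_bigr => j _; have := Hp j; rewrite lt0r => /andP[h _].
    rewrite !mulrA Hrev; field; exact: h.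
  lra.
rewrite (eq_bigr _ (fun i _ => E1 i)) sumrB Hs /mxtrace.
congr (_ - _); apply: eq_bigr => i _; rewrite mxE.
by apply: eq_bigr => j _; rewrite mulrC.
Qed.

Definition Amx (R : realType) n k l (H : hyp n k l) : 'M[R]_k.+1 :=
  \matrix_(i, j) Ptr R n k l (ofI H i) (ofI H j).

Lemma toI_eq n k l (H : hyp n k l) (x y : tab n k l) : (toI x == toI y) = (x == y).
Proof. apply: can_eq; exact: ofI_toI H. Qed.

Lemma Pt_mx (R : realType) n k l (H : hyp n k l) t x y :
  Pt R n k l t x y = (Amx R H ^+ t) (toI x) (toI y).
Proof.
elim: t y => [|t IH] y.
  by rewrite /= expr0 mxE toI_eq.
rewrite /= (eq_bigr (fun z => (Amx R H ^+ t) (toI x) (toI z) * Ptr R n k l z y)); last by move=> z _; rewrite IH.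
rewrite (sum_tab H) exprSr -mulmxE mxE.
apply: eq_bigr => i _; rewrite toI_ofI mxE.
by rewrite -{1}(ofI_toI H y).
Qed.

Lemma pi_ofI (R : realType) n k l (H : hyp n k l) (i : 'I_k.+1) :
  piFY R n k l (ofI H i) = ('C(k, i) * 'C(n - k, l - i))%N%:R / ('C(n, l))%:R.
Proof.
have /andP[H1 H2] := H.
have Hi : (i <= k)%N by rewrite -ltnS.
rewrite /piFY !big_ord_recl !big_ord0 /rowsum /colsum /= !lift00 -/o0 !E_ofI /ent !eqxx !o10.
have h1 := bin_fact Hi.
have h2 : (l - i <= n - k)%N by lia.
have h2' := bin_fact h2.
have e : (n - k - (l - i) = n - k - l + i)%N by lia.
rewrite e in h2'.
have h3 : (l <= n)%N by lia.
have h3' := bin_fact h3.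
rewrite -{1}h1 -{1}h2' -{1}h3'.
have f1 := fact_gt0. have b1 : (0 < 'C(n, l))%N by rewrite bin_gt0.
rewrite !natrM.
by field; rewrite !pnatr_eq0 -!lt0n !fact_gt0 b1.
Qed.

Lemma pi_pos (R : realType) n k l (H : hyp n k l) (i : 'I_k.+1) : 0 < piFY R n k l (ofI H i).
Proof.
have /andP[H1 H2] := H.
have Hi : (i <= k)%N by rewrite -ltnS.
rewrite pi_ofI divr_gt0 // ltr0n ?muln_gt0 !bin_gt0 //; lia.
Qed.

Lemma pi_sum (R : realType) n k l (H : hyp n k l) : \sum_i piFY R n k l (ofI H i) = 1.
Proof.
have /andP[H1 H2] := H.
rewrite (eq_bigr _ (fun i _ => pi_ofI R H i)) -mulr_suml -natr_sum.
have V := binomial.Vandermonde k (n - k)%N l.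
rewrite subnKC in V; last by lia.
have -> : (\sum_(i < k.+1) 'C(k, i) * 'C(n - k, l - i))%N = 'C(n, l).
  rewrite -V (big_ord_widen l.+1 (fun i => 'C(k, i) * 'C(n - k, l - i))%N) //.
  rewrite big_mkcond; apply: eq_bigr => i _; case: ifP => // /negbT; rewrite -leqNgt => h.
  by rewrite bin_small.
rewrite divff // pnatr_eq0 -lt0n bin_gt0; lia.
Qed.

Lemma balance (R : realType) n k l (H : hyp n k l) (i j : 'I_k.+1) : (j : nat) = i.+1 ->
  piFY R n k l (ofI H i) * uN R n k l i = piFY R n k l (ofI H j) * wN R n k l j.
Proof.
move=> ej.
have /andP[H1 H2] := H.
have Hj := ltn_ord j. rewrite ej in Hj.
rewrite !pi_ofI /uN /wN ej.
set c := ('C(n, l))%:R : R.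
have cn : c != 0 by rewrite /c pnatr_eq0 -lt0n bin_gt0; lia.
have e : ('C(k, i) * 'C(n - k, l - i) * (l - i) * (k - i) =
          'C(k, i.+1) * 'C(n - k, l - i.+1) * (n - k - l + i.+1) * i.+1)%N.
  have b1 := mul_bin_left k i.
  have b2 := mul_bin_left (n - k) (l - i.+1).
  have e1 : (l - i.+1).+1 = (l - i)%N by lia.
  have e2 : (n - k - (l - i.+1))%N = (n - k - l + i.+1)%N by lia.
  rewrite e1 e2 in b2.
  set A1 := (k - i)%N in b1 *. set A2 := (l - i)%N in b2 *. set A3 := (n - k - l + i.+1)%N in b2 *.
  set C1 := 'C(k, i) in b1 *. set C2 := 'C(k, i.+1) in b1 *.
  set C3 := 'C(n - k, A2) in b2 *. set C4 := 'C(n - k, l - i.+1) in b2 *.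
  have -> : (C1 * C3 * A2 * A1 = (A1 * C1) * (A2 * C3))%N by ring.
  rewrite -b1 b2; ring.
have e' := congr1 (fun m => m%:R : R) e; rewrite /= !natrM in e'.
rewrite !natrM.
have nn : n%:R != 0 :> R by rewrite pnatr_eq0; lia.
transitivity (2 / (c * n%:R ^+ 2) * ('C(k, i)%:R * 'C(n - k, l - i)%:R * (l - i)%:R * (k - i)%:R)).
  by field; rewrite nn cn.
rewrite e'.
by field; rewrite nn cn.
Qed.

Lemma Amx_E (R : realType) n k l (H : hyp n k l) (i j : 'I_k.+1) :
  Amx R H i j =
  (if j == i then 1 - uN R n k l i - wN R n k l i else 0)
  + (if (j.+1 == i)%N then wN R n k l i else 0) + (if (j == i.+1 :> nat)%N then uN R n k l i else 0).
Proof. by rewrite mxE Ptr_ofI. Qed.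

Lemma Amx_rev (R : realType) n k l (H : hyp n k l) (i j : 'I_k.+1) :
  piFY R n k l (ofI H i) * Amx R H i j = piFY R n k l (ofI H j) * Amx R H j i.
Proof.
rewrite !Amx_E; case: (eqVneq j i) => [->//|ne].
have [e|ne1] := eqVneq (j : nat) i.+1.
  have f1 : (j.+1 == i)%N = false by lia.
  have f2 : (i == j.+1 :> nat)%N = false by lia.
  rewrite f1 f2 e !add0r !addr0 -e.
  exact: balance.
have [e|ne2] := eqVneq (i : nat) j.+1.
  have f2 : (j == i.+1 :> nat)%N = false by lia.
  rewrite ?f2 e !add0r !addr0 -e.
  symmetry; exact: balance.
by rewrite !addr0 !mulr0.
Qed.

Lemma Amx_row (R : realType) n k l (H : hyp n k l) (i : 'I_k.+1) : \sum_j Amx R H i j = 1.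
Proof.
rewrite -(Ptr_rowsum R (ofI H i)) (sum_tab H).
by apply: eq_bigr => j _; rewrite mxE.
Qed.

Definition ff (R : realType) (m : nat) (x : R) : R := \prod_(i < m) (x - i%:R).
Definition beta (R : realType) (n m : nat) : R := 1 - 2 * m%:R * (n%:R - m%:R + 1) / n%:R ^+ 2.
Definition gam (R : realType) (n k l m : nat) : R :=
  2 * m%:R * (m%:R - 1 - k%:R) * (m%:R - 1 - l%:R) / n%:R ^+ 2.

Lemma ffS (R : realType) m (x : R) : ff m.+1 x = ff m x * (x - m%:R).
Proof. by rewrite /ff big_ord_recr. Qed.

Lemma ffSl (R : realType) m (x : R) : ff m.+1 x = x * ff m (x - 1).
Proof.
rewrite /ff big_ord_recl subr0; congr (_ * _); apply: eq_bigr => i _.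
have -> : (bump 0 i)%:R = i%:R + 1 :> R by rewrite -natr1.
lra.
Qed.

Lemma key_id (R : realType) (n k l m : nat) (s x : R) :
  n%:R = s + k%:R + l%:R -> n != 0%N ->
  let u := 2 * (l%:R - x) * (k%:R - x) / n%:R ^+ 2 in
  let w := 2 * (s + x) * x / n%:R ^+ 2 in
  (1 - u - w) * ff m x + w * ff m (x - 1) + u * ff m (x + 1)
  = beta R n m * ff m x + gam R n k l m * ff m.-1 x.
Proof.
move=> hn n0 u w.
have nR : n%:R != 0 :> R by rewrite pnatr_eq0.
case: m => [|p].
  rewrite /ff !big_ord0 /beta /gam /=; rewrite /u /w; field; exact: nR.
set F := ff p x; set G := ff p (x - 1).
have hG : x * G = F * (x - p%:R) by rewrite /F /G -ffSl ffS.
rewrite ffS -/F [ff p.+1 (x - 1)]ffS -/G ffSl addrK -/F /=.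
have -> : w * (G * (x - 1 - p%:R)) = 2 * (s + x) / n%:R ^+ 2 * (x * G) * (x - 1 - p%:R).
  by rewrite /w; field.
rewrite hG /u /w /beta /gam.
rewrite -[(p.+1)%:R]natr1 hn.
have sn : s + k%:R + l%:R != 0 by rewrite -hn.
by field.
Qed.

Definition Fm (R : realType) N : 'M[R]_N := \matrix_(x, m) ff m (x%:R : R).
Definition Cm (R : realType) n k l : 'M[R]_k.+1 :=
  \matrix_(i, j) ((if (i : nat) == j then beta R n j else 0) + (if (i.+1 == j)%N then gam R n k l j else 0)).

Lemma if_mull (R : realType) (b : bool) (a c : R) : (if b then a else 0) * c = if b then a * c else 0.
Proof. by case: b; rewrite ?mul0r. Qed.

Lemma AF (R : realType) n k l (H : hyp n k l) : (0 < n)%N -> Amx R H *m Fm R k.+1 = Fm R k.+1 *m Cm R n k l.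
Proof.
move=> n0; have /andP[H1 H2] := H.
apply/matrixP => x m; rewrite !mxE.
rewrite (eq_bigr (fun y : 'I_k.+1 => (if (y : nat) == x then (1 - uN R n k l x - wN R n k l x) * ff m (y%:R : R) else 0)
   + (if (y.+1 == x)%N then wN R n k l x * ff m (y%:R : R) else 0)
   + (if (y == x.+1 :> nat) then uN R n k l x * ff m (y%:R : R) else 0))); last first.
  by move=> y _; rewrite Amx_E mxE [in LHS]mulrDl [in LHS]mulrDl !if_mull.
rewrite !big_split /= (sum_if_eq _ _ (fun y => (1 - uN R n k l x - wN R n k l x) * ff m (y%:R : R)))
  (sum_if_eqS _ _ (fun y => wN R n k l x * ff m (y%:R : R)))
  (sum_if_eq _ _ (fun y => uN R n k l x * ff m (y%:R : R))) ltn_ord.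
rewrite (eq_bigr (fun j : 'I_k.+1 => (if (j : nat) == m then beta R n m * ff j (x%:R : R) else 0)
   + (if (j.+1 == m)%N then gam R n k l m * ff j (x%:R : R) else 0))); last first.
  move=> j _; rewrite !mxE mulrDr; congr (_ + _).
    by case: eqP => [->|]; rewrite ?mulr0 // mulrC.
  by case: ifP; rewrite ?mulr0 // mulrC.
rewrite big_split /= (sum_if_eq _ _ (fun j => beta R n m * ff j (x%:R : R)))
  (sum_if_eqS _ _ (fun j => gam R n k l m * ff j (x%:R : R))) ltn_ord.
have -> : (if (0 < x <= k.+1)%N then wN R n k l x * ff m (x.-1%:R : R) else 0)
   = wN R n k l x * ff m (x%:R - 1).
  case: (nat_of_ord x) (ltn_ord x) => [|y] hy /=; first by rewrite wN0 mul0r.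
  by rewrite ltnW // -natr1 addrK.
have -> : (if (x.+1 < k.+1)%N then uN R n k l x * ff m (x.+1%:R : R) else 0)
   = uN R n k l x * ff m (x%:R + 1).
  case: ifP => [_|/negbT]; first by rewrite -natr1.
  rewrite -leqNgt => h.
  have -> : (x : nat) = k by move: (ltn_ord x) h; lia.
  by rewrite uNk !mul0r.
have -> : (if (0 < m <= k.+1)%N then gam R n k l m * ff m.-1 (x%:R : R) else 0)
   = gam R n k l m * ff m.-1 (x%:R : R).
  case: (nat_of_ord m) (ltn_ord m) => [|y] hy /=; first by rewrite /gam !mulr0 !mul0r.
  by rewrite ltnW.
have hx : (x <= k)%N by rewrite -ltnS.
have hn : n%:R = (n - k - l)%:R + k%:R + l%:R :> R by rewrite -!natrD; congr _%:R; lia.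
have n0' : n != 0%N by lia.
have K := @key_id R n k l m (n - k - l)%:R x%:R hn n0'.
simpl in K.
have hs : (n - k - l)%:R = n%:R - k%:R - l%:R :> R.
  by rewrite natrB ?natrB //; lia.
rewrite hs in K.
by rewrite /uN /wN natrD !natrB //; try lia.
Qed.

Lemma ff_zero (R : realType) (x m : nat) : (x < m)%N -> ff m (x%:R : R) = 0.
Proof. by move=> h; rewrite /ff (bigD1 (Ordinal h)) //= subrr mul0r. Qed.

Lemma ff_diag (R : realType) (m : nat) : ff m (m%:R : R) != 0.
Proof.
apply/prodf_neq0 => i _; rewrite subr_eq0 eqr_nat.
by apply/negP => /eqP e; have := ltn_ord i; rewrite -e ltnn.
Qed.

Lemma Fm_unit (R : realType) N : Fm R N \in unitmx.
Proof.
rewrite unitmxE det_trig; last by apply/is_trig_mxP => i j h; rewrite mxE ff_zero.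
by rewrite unitfE; apply/prodf_neq0 => i _; rewrite mxE ff_diag.
Qed.

Lemma trig_pow (R : realType) N (C : 'M[R]_N.+1) :
  (forall i j : 'I_N.+1, (j < i)%N -> C i j = 0) ->
  forall s, (forall i j : 'I_N.+1, (j < i)%N -> (C ^+ s) i j = 0) /\ (forall i, (C ^+ s) i i = C i i ^+ s).
Proof.
move=> HC; elim=> [|s [IH1 IH2]].
  split=> [i j h|i]; rewrite expr0 mxE ?eqxx //.
  by case: eqP h => // ->; rewrite ltnn.
split=> [i j h|i]; rewrite exprSr -mulmxE mxE.
  apply: big1 => z _; case: (ltnP z i) => hz; first by rewrite IH1 // mul0r.
  by rewrite HC ?mulr0 // (leq_trans h hz).
rewrite (bigD1 i) //= big1 ?addr0; first by rewrite IH2 exprSr.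
move=> z nz; case: (ltngtP z i) => hz; first by rewrite IH1 // mul0r.
  by rewrite HC ?mulr0.
by move/val_inj: hz nz => ->; rewrite eqxx.
Qed.

Lemma trace_pow (R : realType) n k l (H : hyp n k l) : (0 < n)%N -> forall s,
  \tr (Amx R H ^+ s) = \sum_(i < k.+1) beta R n i ^+ s.
Proof.
move=> n0 s.
set A := Amx R H. set F := Fm R k.+1. set C := Cm R n k l.
have hAF : A *m F = F *m C by exact: AF.
have hFu : F \in unitmx by exact: Fm_unit.
have hp : forall t, A ^+ t *m F = F *m C ^+ t.
  elim=> [|t IH]; first by rewrite !expr0 mul1mx mulmx1.
  by rewrite exprSr -mulmxE -mulmxA hAF mulmxA IH -mulmxA mulmxE -exprSr.
have -> : \tr (A ^+ s) = \tr (C ^+ s).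
  by rewrite -[A ^+ s]mulmx1 -(mulmxV hFu) mulmxA hp -mulmxA mxtrace_mulC -mulmxA mulVmx // mulmx1.
have HC : forall i j : 'I_k.+1, (j < i)%N -> C i j = 0.
  move=> i j h; rewrite mxE (gtn_eqF h) (@gtn_eqF j i.+1 (ltnW h)) addr0 //.
have [_ D] := trig_pow HC s.
rewrite /mxtrace; apply: eq_bigr => i _; rewrite D mxE eqxx ifF ?addr0 //.
by rewrite gtn_eqF.
Qed.

Lemma pair_ineq (R : realType) (a b p q : R) : 0 < p -> 0 < q ->
  2 * (`|a| * `|b|) <= a ^+ 2 * q / p + b ^+ 2 * p / q.
Proof.
move=> hp hq.
rewrite -(real_normK (num_real a)) -(real_normK (num_real b)).
set A := `|a|; set B := `|b|.
rewrite -subr_ge0.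
have -> : A ^+ 2 * q / p + B ^+ 2 * p / q - 2 * (A * B) = (A * q - B * p) ^+ 2 / (p * q).
  by field; rewrite (gt_eqF hp) (gt_eqF hq).
by rewrite divr_ge0 ?sqr_ge0 // mulr_ge0 // ltW.
Qed.

Lemma sq_sum_le (R : realType) (T : finType) (p a : T -> R) :
  (forall y, 0 < p y) -> \sum_y p y = 1 ->
  (\sum_y `|a y|) ^+ 2 <= \sum_y a y ^+ 2 / p y.
Proof.
move=> hp hs.
have -> : \sum_y a y ^+ 2 / p y = \sum_y \sum_z a y ^+ 2 * p z / p y.
  apply: eq_bigr => y _; rewrite -mulr_suml.
  have -> : \sum_z a y ^+ 2 * p z = a y ^+ 2 * \sum_z p z by rewrite mulr_sumr.
  by rewrite hs mulr1.
have -> : (\sum_y `|a y|) ^+ 2 = \sum_y \sum_z `|a y| * `|a z|.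
  by rewrite expr2 mulr_suml; apply: eq_bigr => y _; rewrite mulr_sumr.
set S := \sum_y \sum_z a y ^+ 2 * p z / p y.
set L := \sum_y \sum_z `|a y| * `|a z|.
have hS : S = \sum_y \sum_z a z ^+ 2 * p y / p z by rewrite /S exchange_big.
suff h : 2 * L <= S + S by lra.
rewrite {2}hS /S /L -big_split mulr_sumr.
apply: ler_sum => y _; rewrite -big_split mulr_sumr.
apply: ler_sum => z _.
exact: pair_ineq.
Qed.

Lemma tv_le (R : realType) n k l t (x : tab n k l) :
  0 <= tv R n k l t x <= \sum_y `|Pt R n k l t x y - piFY R n k l y|.
Proof.
rewrite /tv; apply/andP; split.
  set F := (fun A : {set tab n k l} => `| \sum_(y in A) Pt R n k l t x y - \sum_(y in A) piFY R n k l y |).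
  apply: le_trans (le_bigmax 0 F (@finset.set0 _)).
  by rewrite /F normr_ge0.
apply: bigmax_le; first by rewrite sumr_ge0.
move=> A _; rewrite -sumrB.
apply: le_trans (ler_norm_sum _ _ _) _.
rewrite [X in _ <= X](bigID (fun y => y \in A)) /= lerDl sumr_ge0 //.
Qed.

Lemma bern (R : realType) (x : R) (N : nat) : -1 <= x -> 1 + N%:R * x <= (1 + x) ^+ N.
Proof.
move=> hx; elim: N => [|N IH]; first by rewrite mul0r addr0 expr0.
rewrite exprSr -natr1.
have h1 : 0 <= 1 + x by lra.
have h := ler_wpM2r h1 IH.
apply: le_trans h.
have hN : 0 <= N%:R :> R by [].
have : 0 <= N%:R * (x * x) :> R by rewrite mulr_ge0 // -expr2 sqr_ge0.
nra.
Qed.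

Lemma beta0 (R : realType) n : beta R n 0 = 1.
Proof. by rewrite /beta mulr0 !mul0r subr0. Qed.

Lemma beta1 (R : realType) n : (0 < n)%N -> beta R n 1 = 1 - 2 / n%:R.
Proof.
move=> n0; have nR : n%:R != 0 :> R by rewrite pnatr_eq0 -lt0n.
by rewrite /beta; field.
Qed.

Lemma beta_sq (R : realType) n m : (1 <= m)%N -> (2 * m <= n)%N ->
  beta R n m ^+ 2 <= beta R n 1 ^+ 2.
Proof.
move=> m1 mn.
have n0 : (0 < n)%N by lia.
have nR : n%:R != 0 :> R by rewrite pnatr_eq0 -lt0n.
have hM1 : 1 <= m%:R :> R by rewrite ler1n.
have hMN : 2 * m%:R <= n%:R :> R by rewrite -natrM ler_nat.
set M := m%:R : R in hM1 hMN *; set N := n%:R : R in nR hMN *.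
have e1 : beta R n 1 - beta R n m = 2 * (M - 1) * (N - M) / N ^+ 2.
  by rewrite /beta -/M -/N; field.
have e2 : beta R n 1 + beta R n m = 2 * (N ^+ 2 - N - M * (N - M + 1)) / N ^+ 2.
  by rewrite /beta -/M -/N; field.
have p1 : 0 <= beta R n 1 - beta R n m.
  by rewrite e1 divr_ge0 ?sqr_ge0 // mulr_ge0 // ?mulr_ge0 //; lra.
have p2 : 0 <= beta R n 1 + beta R n m.
  rewrite e2 divr_ge0 ?sqr_ge0 // mulr_ge0 //.
  rewrite subr_ge0.
  set d := N - 2 * M.
  have hd : 0 <= d by rewrite /d; lra.
  have eN : N = 2 * M + d by rewrite /d; lra.
  rewrite eN.
  have q1 : 0 <= (M - 1) * M by rewrite mulr_ge0 //; lra.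
  have q2 : 0 <= (M - 1) * d by rewrite mulr_ge0 //; lra.
  have q3 : 0 <= d * d by rewrite mulr_ge0.
  nra.
rewrite -subr_ge0.
have -> : beta R n 1 ^+ 2 - beta R n m ^+ 2 = (beta R n 1 - beta R n m) * (beta R n 1 + beta R n m) by ring.
exact: mulr_ge0.
Qed.

Theorem lemma3p2 (R : realType) (n k l : nat) :
  (1 <= k)%N -> (k <= l)%N -> (l <= n./2)%N ->
  (forall (c : R) (t : nat), 0 < c ->
     t%:R = n%:R / 4 * (ln k%:R + c) ->
     \sum_(x : tab n k l) piFY R n k l x * tv R n k l t x ^+ 2 <= expR (- c)) /\
  (forall (c : R) (t : nat), 0 < c ->
     t%:R = c * n%:R / 4 ->
     1 - c <= \sum_(x : tab n k l) piFY R n k l x * chi2 R n k l x t).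
Proof.
move=> hk hkl hl.
have H : hyp n k l by rewrite /hyp hkl /=; lia.
have n2 : (2 <= n)%N by lia.
have n0 : (0 < n)%N by lia.
have k2 : (2 * k <= n)%N by lia.
have nR : n%:R != 0 :> R by rewrite pnatr_eq0 -lt0n.
have nRp : 0 < n%:R :> R by rewrite ltr0n.
have n2R : 2 <= n%:R :> R by rewrite ler_nat.
set p := fun i => piFY R n k l (ofI H i).
have Schi : forall t, \sum_x piFY R n k l x * chi2 R n k l x t
    = \sum_(i < k.+1) beta R n i ^+ (t + t) - 1.
  move=> t; rewrite (sum_tab H).
  have -> : \sum_i piFY R n k l (ofI H i) * chi2 R n k l (ofI H i) t
      = \sum_i p i * \sum_j ((Amx R H ^+ t) i j - p j) ^+ 2 / p j.
    apply: eq_bigr => i _; congr (_ * _); rewrite /chi2 (sum_tab H); apply: eq_bigr => j _.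
    by rewrite Pt_mx !toI_ofI.
  have hp : forall i, 0 < p i by move=> i; exact: pi_pos.
  have hs : \sum_i p i = 1 by exact: pi_sum.
  have hrow := mx_row_pow (Amx_row R H) t.
  have hrev := mx_rev_pow (Amx_rev R H) t.
  rewrite (chi_trace hp hs hrow hrev).
  by rewrite mulmxE -exprD trace_pow.
have Stail : forall t, \sum_(i < k.+1) beta R n i ^+ (t + t) - 1
    = \sum_(i < k) beta R n i.+1 ^+ (t + t).
  move=> t; rewrite big_ord_recl beta0 expr1n addrAC subrr add0r.
  by apply: eq_bigr => i _; rewrite lift0.
have b1 := beta1 R n0.
have b1ge0 : 0 <= beta R n 1.
  rewrite b1 subr_ge0 ler_pdivrMr // mul1r //.
have pig0 : forall x : tab n k l, 0 < piFY R n k l x.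
  by move=> x; rewrite -(ofI_toI H x); exact: pi_pos.
have pis : \sum_x piFY R n k l x = 1 by rewrite (sum_tab H) pi_sum.
split.
  move=> c t c0 ht.
  apply: (@le_trans _ _ (\sum_x piFY R n k l x * chi2 R n k l x t)).
    apply: ler_sum => x _; rewrite ler_pM2l //.
    have /andP[tv0 tvL] := tv_le R t x.
    have hsq := sq_sum_le (fun y => Pt R n k l t x y - piFY R n k l y) pig0 pis.
    have h2 : tv R n k l t x ^+ 2 <= (\sum_y `|Pt R n k l t x y - piFY R n k l y|) ^+ 2.
      by rewrite lerXn2r // nnegrE (le_trans tv0 tvL).
    exact: le_trans h2 hsq.
  rewrite Schi Stail.
  apply: (@le_trans _ _ (\sum_(i < k) beta R n 1 ^+ (t + t))).
    apply: ler_sum => i _.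
    rewrite addnn -mul2n !exprM lerXn2r // ?nnegrE ?sqr_ge0 //.
    apply: beta_sq => //; move: (ltn_ord i); lia.
  rewrite sumr_const card_ord -mulr_natl.
  have e1 : beta R n 1 ^+ (t + t) <= expR (- (ln k%:R + c)).
    have h1 : beta R n 1 <= expR (- (2 / n%:R)) by rewrite b1 (le_trans _ (expR_ge1Dx _)).
    apply: (le_trans (lerXn2r _ _ _ h1)); rewrite ?nnegrE ?expR_ge0 //.
    rewrite -expRM_natl.
    have -> : (t + t)%:R * - (2 / n%:R) = - (ln k%:R + c) :> R.
      rewrite natrD ht; field; exact: nR.
    by [].
  have kp : 0 < k%:R :> R by rewrite ltr0n.
  apply: (le_trans (ler_wpM2l (ltW kp) e1)).
  rewrite opprD expRD (expRN (ln _)) lnK ?posrE //.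
  by rewrite mulrA mulfV ?mul1r // gt_eqF.
move=> c t c0 ht.
rewrite Schi Stail.
rewrite (bigD1 (Ordinal hk)) //=.
have rest : 0 <= \sum_(i < k | i != Ordinal hk) beta R n i.+1 ^+ (t + t).
  by apply: sumr_ge0 => i _; rewrite addnn -mul2n exprM exprn_ge0 // sqr_ge0.
apply: (@le_trans _ _ (beta R n 1 ^+ (t + t))); last by rewrite lerDl.
rewrite b1.
have hx : -1 <= - (2 / n%:R) :> R.
  rewrite lerN2 ler_pdivrMr // mul1r //.
have := bern (t + t) hx.
have -> : 1 + (t + t)%:R * - (2 / n%:R) = 1 - c :> R.
  rewrite natrD ht; field; exact: nR.
by [].
Qed.
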